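(* Let $X$ be a planar Peano continuum and $x_0\in X$. If $x\in X$ is a wedge point for both of the pseudo-Hawaiian earring subgroups $H_1$ and $H_2$ of $\pi_1(X,x_0)$, then $H_1\sim H_2$.
   Context: $\mathbf E$ is the Hawaiian earring (union of circles centered at $(0,1/n)$ of radius $1/n$ in $\mathbb R^2$, basepoint $0$), $\mathbb H=\pi_1(\mathbf E,0)$. For a path $\alpha$, $\hat\alpha([g])=[\overline\alpha*g*\alpha]$. A pseudo-Hawaiian earring subgroup of $\pi_1(X,x_0)$ is a subgroup which is an uncountable homomorphic image of $\mathbb H$. A point $x$ is a wedge point of such $H$ if there exist a surjective homomorphism $\psi:\mathbb H\to H$, a continuous $f:(\mathbf E,0)\to(X,x)$ and a path $\alpha$ from $x$ to $x_0$ with $\psi=\hat\alpha\circ f_*$. $H_1\sim H_2$ means there exist $g\in\pi_1(X,x_0)$ and a pseudo-Hawaiian earring subgroup $H$ of $\pi_1(X,x_0)$ with $H_1\subset H$ and $gH_2g^{-1}\subset H$. *)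

(* Defs.v *)
(* The fundamental group is not in the library, so
   homotopy classes of loops are handled through representatives: a subset of
   pi_1(X,x0) is represented by a homotopy-saturated predicate on loops. *)
From HB Require Import structures.
From mathcomp Require Import all_boot all_order all_algebra.
From mathcomp Require Import all_classical all_reals all_analysis.
Set Implicit Arguments. Unset Strict Implicit. Unset Printing Implicit Defensive.
Import Order.TTheory GRing.Theory Num.Theory.
Import numFieldNormedType.Exports.
Local Open Scope classical_set_scope.
Local Open Scope ring_scope.

Section Defs.
Variable R : realType.
Local Notation P := (R * R)%type.

Definition unitI : set R := [set s | 0 <= s <= 1].
Definition unitSq : set (R * R) := unitI `*` unitI.

Definition origin : P := (0, 0).

Definition hawaiian_earring : set P :=
  [set z | exists n : nat, (0 < n)%N /\
     z.1 ^+ 2 + (z.2 - n%:R^-1) ^+ 2 = (n%:R^-1) ^+ 2].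

Definition locally_connected (X : set P) :=
  forall x, X x -> forall U : set P, open U -> U x ->
    exists V : set P, [/\ V `<=` U `&` X, connected V &
      exists W : set P, [/\ open W, W x & W `&` X `<=` V]].

(** a planar Peano continuum: compact, connected, locally connected subset of
    the plane (metrizability is automatic) *)
Definition planar_peano_continuum (X : set P) :=
  [/\ compact X, connected X & locally_connected X].

(** paths in X, parametrized by [0,1] (values outside [0,1] are irrelevant) *)
Definition is_path (X : set P) (p : R -> P) :=
  {within unitI, continuous p} /\ p @` unitI `<=` X.

Definition is_path_from_to (X : set P) (a b : P) (p : R -> P) :=
  [/\ is_path X p, p 0 = a & p 1 = b].

Definition is_loop (X : set P) (a : P) (p : R -> P) := is_path_from_to X a a p.

Definition path_concat (p q : R -> P) : R -> P :=
  fun s => if s <= 2^-1 then p (2 * s) else q (2 * s - 1).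
Definition path_rev (p : R -> P) : R -> P := fun s => p (1 - s).

Definition path_homotopic (X : set P) (p q : R -> P) :=
  [/\ is_path X p, is_path X q, p 0 = q 0, p 1 = q 1 &
   exists h : P -> P,
     [/\ {within unitSq, continuous h}, h @` unitSq `<=` X,
         (forall s, unitI s -> h (s, 0) = p s /\ h (s, 1) = q s) &
         (forall t, unitI t -> h (0, t) = p 0 /\ h (1, t) = p 1)]].

(** A subset S of pi_1(X,x0) (given as a predicate on loops, saturated) is
    countable iff its homotopy classes can be injectively coded by nat. *)
Definition countable_classes (X : set P) (S : set (R -> P)) :=
  exists c : (R -> P) -> nat,
    forall l l', S l -> S l' -> c l = c l' -> path_homotopic X l l'.

(** psi is (a representative-level description of) a homomorphism
    HH = pi_1(E,0) -> pi_1(X,x0) *)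
Definition HE_hom (X : set P) (x0 : P) (psi : (R -> P) -> (R -> P)) :=
  [/\ (forall g, is_loop hawaiian_earring origin g -> is_loop X x0 (psi g)),
      (forall g g', path_homotopic hawaiian_earring g g' ->
         is_loop hawaiian_earring origin g ->
         path_homotopic X (psi g) (psi g')) &
      (forall g g', is_loop hawaiian_earring origin g ->
         is_loop hawaiian_earring origin g' ->
         path_homotopic X (psi (path_concat g g'))
                          (path_concat (psi g) (psi g')))].

Definition is_image_of (X : set P) (x0 : P) (psi : (R -> P) -> (R -> P))
    (H : set (R -> P)) :=
  forall l, H l <-> (is_loop X x0 l /\
     exists g, is_loop hawaiian_earring origin g /\ path_homotopic X (psi g) l).

Definition pseudo_HE_subgroup (X : set P) (x0 : P) (H : set (R -> P)) :=
  (exists psi, HE_hom X x0 psi /\ is_image_of X x0 psi H) /\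
  ~ countable_classes X H.

Definition wedge_map (f : P -> P) (alpha : R -> P) : (R -> P) -> (R -> P) :=
  fun g => path_concat (path_concat (path_rev alpha) (f \o g)) alpha.

Definition wedge_point (X : set P) (x0 : P) (H : set (R -> P)) (x : P) :=
  exists (f : P -> P) (alpha : R -> P),
    [/\ {within hawaiian_earring, continuous f},
        f @` hawaiian_earring `<=` X, f origin = x,
        is_path_from_to X x x0 alpha &
        exists psi, [/\ HE_hom X x0 psi, is_image_of X x0 psi H &
          forall g, is_loop hawaiian_earring origin g ->
            path_homotopic X (psi g) (wedge_map f alpha g)]].

Definition HE_equiv (X : set P) (x0 : P) (H1 H2 : set (R -> P)) :=
  exists (g : R -> P) (H : set (R -> P)),
    [/\ is_loop X x0 g, pseudo_HE_subgroup X x0 H, H1 `<=` H &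
        forall l, H2 l -> H (path_concat (path_concat g l) (path_rev g))].

End Defs.

(* Main.v *)
From HB Require Import structures.
Require Import Defs.
From mathcomp Require Import all_boot all_order all_algebra.
From mathcomp Require Import all_classical all_reals all_analysis.
From mathcomp Require Import ring lra zify.
Set Implicit Arguments. Unset Strict Implicit. Unset Printing Implicit Defensive.
Import Order.TTheory GRing.Theory Num.Theory.
Import numFieldNormedType.Exports.
Local Open Scope classical_set_scope.
Local Open Scope ring_scope.

Ltac ifs := repeat (let H := fresh "H" in
  case: ifP => H; [idtac| move/negbT: H; rewrite -ltNge => H]).
Ltac fin := try (exfalso; lra); try (match goal with |- ?f _ = ?f _ => congr f; lra end).


Lemma cvg_within_into {T U : Type} (A : set T) (B : set U) (F : set_system T) (G : set_system U)
  (g : T -> U) {FF : Filter F} : (forall y, A y -> B (g y)) -> g @ within A F --> G ->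
  g @ within A F --> within B G.
Proof.
move=> AB gG P /= WP.
have := gG _ WP; rewrite /within /= !nbhs_simpl /=.
move=> H; apply: (filterS2 _ _ H (withinT A FF)) => y /= h _ Ay; exact: (h Ay (AB _ Ay)).
Qed.

Lemma compW (T U V : topologicalType) (A : set T) (B : set U) (g : T -> U) (f : U -> V) :
  {within A, continuous g} -> {within B, continuous f} -> (forall y, A y -> B (g y)) ->
  {within A, continuous (f \o g)}.
Proof.
rewrite !subspace_continuousP => cg cf AB x Ax.
have h : g @ within A (nbhs x) --> within B (nbhs (g x)).
  by apply: cvg_within_into => //; exact: cg.
exact: (cvg_comp g f h (cf _ (AB _ Ax))).
Qed.

Lemma compC (T U V : topologicalType) (A : set T) (B : set U) (g : T -> U) (f : U -> V) :
  continuous g -> {within B, continuous f} -> (forall y, A y -> B (g y)) ->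
  {within A, continuous (f \o g)}.
Proof. by move=> cg; apply: compW; apply: continuous_subspaceT. Qed.

Lemma eqW (T U : topologicalType) (A : set T) (f g : T -> U) :
  (forall x, A x -> f x = g x) -> {within A, continuous f} -> {within A, continuous g}.
Proof. move=> e; apply: subspace_eq_continuous => x /set_mem; exact: e. Qed.

Section Paste.
Variable R : realType.
Lemma paste (T U : topologicalType) (D : set T) (c : T -> R) (a : R) (g k : T -> U) :
  closed D -> continuous c ->
  {within D `&` [set z | c z <= a], continuous g} ->
  {within D `&` [set z | a <= c z], continuous k} ->
  (forall z, D z -> c z = a -> g z = k z) ->
  {within D, continuous (fun z => if c z <= a then g z else k z)}.
Proof.
move=> cD cc cg ck gk.
have -> : D = (D `&` [set z | c z <= a]) `|` (D `&` [set z | a <= c z]).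
  apply/seteqP; split => z.
    by move=> Dz; case: (lerP (c z) a) => h; [left|right; split => //; exact: ltW].
  by case => -[].
have cl1 : closed [set z | c z <= a].
  by apply: (@preimage_closed _ _ c [set r | r <= a]); [move=> ? _; exact: cc| exact: closed_le].
have cl2 : closed [set z | a <= c z].
  by apply: (@preimage_closed _ _ c [set r | a <= r]); [move=> ? _; exact: cc| exact: closed_ge].
apply: withinU_continuous; try exact: closedI.
  by apply: eqW cg => z [_ ->].
apply: eqW ck => z [Dz /= h]; case: ifP => // h2.
by apply/esym/gk => //; apply/eqP; rewrite eq_le h2 h.
Qed.
End Paste.



Section Paths.
Variable R : realType.
Local Notation P := (R * R)%type.
Local Notation I := (@unitI R).

Lemma closed_I : closed I.
Proof.
have -> : I = [set s | 0 <= s] `&` [set s | s <= 1].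
  apply/seteqP; split => s /=; rewrite /unitI /=; first by move=> /andP[].
  by move=> [-> ->].
by apply: closedI; [exact: closed_ge|exact: closed_le].
Qed.

Lemma closed_Sq : closed (@unitSq R).
Proof.
have -> : @unitSq R = (fst @^-1` I) `&` (snd @^-1` I) by [].
apply: closedI; apply: preimage_closed => //; try exact: closed_I.
  by move=> z _; exact: cvg_fst.
by move=> z _; exact: cvg_snd.
Qed.

Lemma cont_fst : continuous (@fst R R). Proof. move=> z; exact: cvg_fst. Qed.
Lemma cont_snd : continuous (@snd R R). Proof. move=> z; exact: cvg_snd. Qed.

Lemma cont_pair (T : topologicalType) (f g : T -> R) : continuous f -> continuous g ->
  continuous (fun z => (f z, g z)).
Proof. move=> cf cg z. apply: (@cvg_pair _ _ _ _ (nbhs (f z)) (nbhs (g z))); [exact: cf | exact: cg]. Qed.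

Lemma cont_aff (a b : R) : continuous (fun s : R => a * s + b).
Proof. move=> s; apply: cvgD; last exact: cvg_cst. apply: cvgM; [exact: cvg_cst| exact: cvg_id]. Qed.

Lemma cont_compR (T U : topologicalType) (f : T -> U) (g : U -> R) : continuous f -> continuous g ->
  continuous (g \o f).
Proof. move=> cf cg z; apply: continuous_comp; [exact: cf| exact: cg]. Qed.

Lemma two_half : 2 * 2^-1 = 1 :> R. Proof. by rewrite divff. Qed.

Variable X : set P.
Local Notation hom := (path_homotopic X).
Local Notation pth := (is_path_from_to X).
Local Notation cat := (@path_concat R).
Local Notation rev := (@path_rev R).

Lemma path_comp (p : R -> P) (phi : R -> R) : is_path X p -> continuous phi ->
  (forall s, I s -> I (phi s)) -> is_path X (p \o phi).
Proof.
move=> [cp ip] cphi phiI; split; first exact: (compC cphi cp phiI).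
by move=> _ [s Is <-]; apply: ip; exists (phi s) => //; exact: phiI.
Qed.

Lemma path_eqI (p q : R -> P) : is_path X p -> (forall s, I s -> p s = q s) -> is_path X q.
Proof.
move=> [cp ip] e; split; first exact: eqW cp.
by move=> _ [s Is <-]; rewrite -e //; apply: ip; exists s.
Qed.

Lemma I0 : I 0. Proof. by rewrite /unitI /= lexx ler01. Qed.
Lemma I1 : I 1. Proof. by rewrite /unitI /= lexx ler01. Qed.

Lemma cat0 (p q : R -> P) : cat p q 0 = p 0.
Proof. by rewrite /path_concat ifT ?mulr0 // invr_ge0 ler0n. Qed.
Lemma cat1 (p q : R -> P) : cat p q 1 = q 1.
Proof. rewrite /path_concat ifF; first by congr q; lra. by apply/negbTE; rewrite -ltNge; lra. Qed.
Lemma rev0 (p : R -> P) : rev p 0 = p 1. Proof. by rewrite /path_rev subr0. Qed.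
Lemma rev1 (p : R -> P) : rev p 1 = p 0. Proof. by rewrite /path_rev subrr. Qed.

Lemma path_cat (p q : R -> P) : is_path X p -> is_path X q -> p 1 = q 0 -> is_path X (cat p q).
Proof.
move=> [cp ip] [cq iq] e; split.
  apply: (@eqW _ _ I (fun z => if id z <= 2^-1 then (p \o (fun s => 2*s+0)) z else (q \o (fun s => 2*s + -1)) z)).
    by move=> s _ /=; rewrite /path_concat addr0.
  apply: (@paste R _ _ I id 2^-1 (p \o (fun s => 2 * s + 0)) (q \o (fun s => 2 * s + -1))).
  - exact: closed_I.
  - by move=> s; exact: cvg_id.
  - apply: (compC _ cp) => [|s [/andP[h0 h1] /= h2]]; first exact: cont_aff.
    rewrite /unitI /=; apply/andP; split; lra.
  - apply: (compC _ cq) => [|s [/andP[h0 h1] /= h2]]; first exact: cont_aff.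
    rewrite /unitI /=; apply/andP; split; lra.
  - by move=> s _ /= ->; rewrite addr0 two_half e; congr q; lra.
move=> _ [s /andP[h0 h1] <-]; rewrite /path_concat; ifs.
  by apply: ip; exists (2 * s) => //; rewrite /unitI /=; apply/andP; split; lra.
by apply: iq; exists (2 * s - 1) => //; rewrite /unitI /=; apply/andP; split; lra.
Qed.

Lemma pth_cat (a b c : P) p q : pth a b p -> pth b c q -> pth a c (cat p q).
Proof.
move=> [pp p0 p1] [qp q0 q1]; split; rewrite ?cat0 ?cat1 //.
by apply: path_cat => //; rewrite p1 q0.
Qed.

Lemma pth_rev (a b : P) p : pth a b p -> pth b a (rev p).
Proof.
move=> [pp p0 p1]; split; rewrite ?rev0 ?rev1 //.
apply: (@path_eqI (p \o (fun s => -1 * s + 1))); last by move=> s _; rewrite /path_rev /=; congr p; lra.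
apply: (@path_comp p (fun s => -1 * s + 1)) => //; first exact: cont_aff.
by move=> s /andP[h0 h1]; rewrite /unitI /=; apply/andP; split; lra.
Qed.

Lemma path_const (a : P) : X a -> is_path X (fun _ => a).
Proof.
move=> Xa; split; last by move=> _ [s _ <-].
by apply: continuous_subspaceT => s; exact: cvg_cst.
Qed.

Lemma pth_const (a : P) : X a -> pth a a (fun _ => a).
Proof. by move=> Xa; split => //; exact: path_const. Qed.

Lemma pth_path a b p : pth a b p -> is_path X p. Proof. by case. Qed.
Lemma pth_X0 a b p : pth a b p -> X a.
Proof. by move=> [[_ ip] <- _]; apply: ip; exists 0 => //; exact: I0. Qed.
Lemma pth_X1 a b p : pth a b p -> X b.
Proof. by move=> [[_ ip] _ <-]; apply: ip; exists 1 => //; exact: I1. Qed.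

Lemma hom_family (p : R -> P) (Phi : P -> R) (f g : R -> R) :
  is_path X p -> continuous Phi -> (forall z, @unitSq R z -> I (Phi z)) ->
  (forall t, I t -> Phi (0, t) = Phi (0, 0) /\ Phi (1, t) = Phi (1, 0)) ->
  (forall s, I s -> f s = Phi (s, 0) /\ g s = Phi (s, 1)) ->
  hom (p \o f) (p \o g).
Proof.
move=> pp cPhi PhiI Phie fg.
have Iff : forall s, I s -> I (f s).
  by move=> s Is; rewrite (fg s Is).1; apply: PhiI; split => //; exact: I0.
have Igg : forall s, I s -> I (g s).
  by move=> s Is; rewrite (fg s Is).2; apply: PhiI; split => //; exact: I1.
have pf : is_path X (p \o f).
  apply: (@path_eqI (p \o (fun s => Phi (s, 0)))).
    apply: path_comp pp _ _ => [|s Is].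
      apply: (cont_compR _ cPhi); apply: cont_pair => s; [exact: cvg_id|exact: cvg_cst].
    by apply: PhiI; split => //; exact: I0.
  by move=> s Is /=; rewrite (fg s Is).1.
have pg : is_path X (p \o g).
  apply: (@path_eqI (p \o (fun s => Phi (s, 1)))).
    apply: path_comp pp _ _ => [|s Is].
      apply: (cont_compR _ cPhi); apply: cont_pair => s; [exact: cvg_id|exact: cvg_cst].
    by apply: PhiI; split => //; exact: I1.
  by move=> s Is /=; rewrite (fg s Is).2.
split => //.
- by rewrite /= (fg 0 I0).1 (fg 0 I0).2 (Phie 1 I1).1.
- by rewrite /= (fg 1 I1).1 (fg 1 I1).2 (Phie 1 I1).2.
exists (p \o Phi); split.
- by apply: (compC cPhi _ PhiI); case: pp.
- by move=> _ [z Iz <-]; case: pp => _; apply; exists (Phi z) => //; exact: PhiI.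
- by move=> s Is /=; rewrite (fg s Is).1 (fg s Is).2.
- by move=> t It /=; rewrite (fg 0 I0).1 (fg 1 I1).1 (Phie t It).1 (Phie t It).2.
Qed.

End Paths.



Section Hom.
Variable R : realType.
Local Notation P := (R * R)%type.
Local Notation I := (@unitI R).
Variable X : set P.
Local Notation hom := (path_homotopic X).
Local Notation pth := (is_path_from_to X).
Local Notation cat := (@path_concat R).
Local Notation rev := (@path_rev R).

Lemma cont_aff_snd (a b : R) : continuous (fun z : P => a * z.2 + b).
Proof. exact: (@cont_compR R _ _ snd (fun t => a * t + b) (@cont_snd R) (@cont_aff R a b)). Qed.
Lemma cont_aff_fst (a b : R) : continuous (fun z : P => a * z.1 + b).
Proof. exact: (@cont_compR R _ _ fst (fun t => a * t + b) (@cont_fst R) (@cont_aff R a b)). Qed.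

Lemma hom_eqI (p q : R -> P) : is_path X p -> (forall s, I s -> p s = q s) -> hom p q.
Proof.
move=> pp e.
have := @hom_family R X p (fun z => z.1) id id pp (@cont_fst R) (fun z h => proj1 h) (fun t _ => conj erefl erefl)
  (fun s _ => conj erefl erefl).
move=> [_ _ _ _ [h [ch ih hb he]]].
have qp : is_path X q by apply: path_eqI pp e.
split => //; try (by rewrite -e //; exact: I0); try (by rewrite -e //; exact: I1).
exists h; split => //.
by move=> s Is; have [-> ->] := hb s Is; rewrite /= e.
Qed.

Lemma hom_refl p : is_path X p -> hom p p.
Proof. by move=> pp; apply: hom_eqI. Qed.

Lemma hom_path1 p q : hom p q -> is_path X p. Proof. by case. Qed.
Lemma hom_path2 p q : hom p q -> is_path X q. Proof. by case. Qed.

Lemma hom_sym p q : hom p q -> hom q p.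
Proof.
move=> [pp qp e0 e1 [h [ch ih hb he]]]; split => //.
exists (h \o (fun z => (z.1, -1 * z.2 + 1))); split.
- apply: (compC _ ch) => [|z [/= I1z /andP[a b]]].
    by apply: cont_pair; [exact: cont_fst| exact: cont_aff_snd].
  by split => //=; apply/andP; split; lra.
- move=> _ [z [/= I1z /andP[a b]] <-]; apply: ih; exists (z.1, -1 * z.2 + 1) => //.
  by split => //=; apply/andP; split; lra.
- move=> s Is /=; have [h0 h1] := hb s Is.
  by split; [rewrite mulr0 add0r h1|rewrite mulr1 addNr h0].
- move=> t /andP[a b] /=; have It : I (-1 * t + 1) by apply/andP; split; lra.
  by rewrite -e0 -e1; exact: he.
Qed.

Lemma hom_trans p q r : hom p q -> hom q r -> hom p r.
Proof.
move=> [pp qp e0 e1 [h [ch ih hb he]]] [_ rp f0 f1 [k [ck ik kb ke]]]; split => //;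
  rewrite ?e0 ?e1 //.
exists (fun z => if snd z <= 2^-1 then (h \o (fun z => (z.1, 2 * z.2 + 0))) z
                 else (k \o (fun z => (z.1, 2 * z.2 + -1))) z); split.
- apply: paste; first exact: closed_Sq.
  + exact: cont_snd.
  + apply: (compC _ ch) => [|z [[/= I1z /andP[a b]] /= c]].
      by apply: cont_pair; [exact: cont_fst| exact: cont_aff_snd].
    by split => //=; apply/andP; split; lra.
  + apply: (compC _ ck) => [|z [[/= I1z /andP[a b]] /= c]].
      by apply: cont_pair; [exact: cont_fst| exact: cont_aff_snd].
    by split => //=; apply/andP; split; lra.
  + move=> [s t] [/= Is _] /= ->; rewrite addr0 two_half (hb s Is).2.
    by rewrite -(kb s Is).1; congr k; congr pair; lra.
- move=> _ [[s t] [/= Is /andP[a b]] <-] /=; ifs.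
    by apply: ih; exists (s, 2 * t + 0) => //; split => //=; apply/andP; split; lra.
  by apply: ik; exists (s, 2 * t + -1) => //; split => //=; apply/andP; split; lra.
- move=> s Is /=; rewrite ifT ?invr_ge0 ?ler0n // mulr0 addr0 (hb s Is).1.
  rewrite ifF; last by apply/negbTE; rewrite -ltNge; lra.
  split => //; rewrite -(kb s Is).2; congr k; congr pair; lra.
- move=> t /andP[a b] /=; ifs.
    have It : I (2 * t + 0) by apply/andP; split; lra.
    by rewrite -e0 -e1; exact: he.
  have It : I (2 * t + -1) by apply/andP; split; lra.
  exact: ke.
Qed.

Lemma hom_cat p p' q q' : hom p p' -> hom q q' -> p 1 = q 0 -> hom (cat p q) (cat p' q').
Proof.
move=> [pp pp' e0 e1 [h [ch ih hb he]]] [qp qp' f0 f1 [k [ck ik kb ke]]] pq.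
split; rewrite ?cat0 ?cat1 //; try (apply: path_cat => //; congruence).
exists (fun z => if fst z <= 2^-1 then (h \o (fun z => (2 * z.1 + 0, z.2))) z
                 else (k \o (fun z => (2 * z.1 + -1, z.2))) z); split.
- apply: paste; first exact: closed_Sq.
  + exact: cont_fst.
  + apply: (compC _ ch) => [|z [[/= /andP[a b] I2z] /= c]].
      by apply: cont_pair; [exact: cont_aff_fst|exact: cont_snd].
    by split => //=; apply/andP; split; lra.
  + apply: (compC _ ck) => [|z [[/= /andP[a b] I2z] /= c]].
      by apply: cont_pair; [exact: cont_aff_fst|exact: cont_snd].
    by split => //=; apply/andP; split; lra.
  + move=> [s t] [/= _ It] /= ->; rewrite addr0 two_half (he t It).2.
    by rewrite subrr (ke t It).1 pq.
- move=> _ [[s t] [/= /andP[a b] It] <-] /=; ifs.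
    by apply: ih; exists (2 * s + 0, t) => //; split => //=; apply/andP; split; lra.
  by apply: ik; exists (2 * s + -1, t) => //; split => //=; apply/andP; split; lra.
- move=> s /andP[a b] /=; rewrite /path_concat; ifs.
    have Is : I (2 * s + 0) by apply/andP; split; lra.
    by have [-> ->] := hb _ Is; rewrite addr0.
  have Is : I (2 * s + -1) by apply/andP; split; lra.
  by have [-> ->] := kb _ Is.
- move=> t It /=; rewrite ifT ?invr_ge0 ?ler0n // mulr0 addr0 (he t It).1.
  rewrite ifF; last by apply/negbTE; rewrite -ltNge; lra.
  have -> : 2 * 1 + -1 = 1 :> R by lra.
  by rewrite (ke t It).2.
Qed.

Lemma hom_map (Y : set P) (F : P -> P) p q :
  {within Y, continuous F} -> (forall y, Y y -> X (F y)) ->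
  path_homotopic Y p q -> hom (F \o p) (F \o q).
Proof.
move=> cF FY [[cp ip] [cq iq] e0 e1 [h [ch ih hb he]]].
have pth_of (r : R -> P) : {within I, continuous r} -> r @` I `<=` Y -> is_path X (F \o r).
  move=> cr ir; split; first by apply: (compW cr cF) => s Is; apply: ir; exists s.
  by move=> _ [s Is <-]; apply: FY; apply: ir; exists s.
split => //=; try exact: pth_of; rewrite ?e0 ?e1 //.
exists (F \o h); split.
- by apply: (compW ch cF) => z Iz; apply: ih; exists z.
- by move=> _ [z Iz <-]; apply: FY; apply: ih; exists z.
- by move=> s Is /=; have [-> ->] := hb s Is.
- by move=> t It /=; have [-> ->] := he t It; rewrite e0 e1.
Qed.

End Hom.



Section Laws.
Variable R : realType.
Local Notation P := (R * R)%type.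
Local Notation I := (@unitI R).
Variable X : set P.
Local Notation hom := (path_homotopic X).
Local Notation pth := (is_path_from_to X).
Local Notation cat := (@path_concat R).
Local Notation rev := (@path_rev R).

Lemma reparam (p : R -> P) (phi : R -> R) : is_path X p -> continuous phi ->
  (forall s, I s -> I (phi s)) -> phi 0 = 0 -> phi 1 = 1 -> hom (p \o phi) p.
Proof.
move=> pp cphi phiI e0 e1.
apply: (@hom_family R X p (fun z => (1 - z.2) * phi z.1 + z.2 * z.1) phi id pp).
- move=> z; apply: cvgD; apply: cvgM.
  + apply: cvgB; [exact: cvg_cst|exact: cvg_snd].
  + by apply: continuous_comp; [exact: cvg_fst|exact: cphi].
  + exact: cvg_snd.
  + exact: cvg_fst.
- move=> [s t] [/= Is /andP[a b]]; have /andP[c d] := phiI s Is.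
  move: Is => /andP[a' b']; apply/andP; split; nra.
- by move=> t _ /=; rewrite e0 e1; split; ring.
- by move=> s _ /=; split; ring.
Qed.

Lemma null (p : R -> P) (phi : R -> R) : is_path X p -> continuous phi ->
  (forall s, I s -> I (phi s)) -> phi 0 = 0 -> phi 1 = 0 -> hom (p \o phi) (fun _ => p 0).
Proof.
move=> pp cphi phiI e0 e1.
apply: (@hom_family R X p (fun z => (1 - z.2) * phi z.1) phi (fun _ => 0) pp).
- move=> z; apply: cvgM.
  + apply: cvgB; [exact: cvg_cst|exact: cvg_snd].
  + by apply: continuous_comp; [exact: cvg_fst|exact: cphi].
- move=> [s t] [/= Is /andP[a b]]; have /andP[c d] := phiI s Is.
  apply/andP; split; nra.
- by move=> t _ /=; rewrite e0 e1; split; ring.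
- by move=> s _ /=; split; ring.
Qed.

Lemma cont_minA (f g : R -> R) : continuous f -> continuous g -> continuous (f \min g).
Proof. by move=> cf cg s; apply: continuous_min; [exact: cf|exact: cg]. Qed.
Lemma cont_maxA (f g : R -> R) : continuous f -> continuous g -> continuous (f \max g).
Proof. by move=> cf cg s; apply: continuous_max; [exact: cf|exact: cg]. Qed.


Lemma hom_assoc a b c d p q r : pth a b p -> pth b c q -> pth c d r ->
  hom (cat (cat p q) r) (cat p (cat q r)).
Proof.
move=> hp hq hr.
have pqr := pth_cat hp (pth_cat hq hr).
pose phi := (fun s : R => 2 * s + 0) \min ((fun s : R => 1 * s + 4^-1) \min (fun s : R => 2^-1 * s + 2^-1)).
have cphi : continuous phi by apply: cont_minA; [|apply: cont_minA]; exact: cont_aff.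
have phiv : forall s, phi s = if s <= 4^-1 then 2 * s else if s <= 2^-1 then s + 4^-1 else 2^-1 * s + 2^-1.
  move=> s; rewrite /phi /=; case: (lerP s 4^-1) => s1.
    rewrite (@min_l _ _ (2*s+0)) ?addr0 // le_min; apply/andP; split; lra.
  case: (lerP s 2^-1) => s2.
    rewrite (@min_l _ _ (1*s+4^-1)); last lra.
    rewrite min_r; last lra. by rewrite mul1r.
  rewrite (@min_r _ _ (1*s+4^-1)); last lra.
  by rewrite min_r; last lra.
apply: (@hom_trans _ _ _ (cat p (cat q r) \o phi)).
  apply: hom_eqI; first exact: (pth_path (pth_cat (pth_cat hp hq) hr)).
  move=> s /andP[a0 a1]; rewrite /= phiv.
  case: (lerP s 4^-1) => s1; [|case: (lerP s 2^-1) => s2];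
  rewrite ?s1 ?s2 ?(leNgt s 4^-1) ?(leNgt s 2^-1) ?s1 ?s2 /= /path_concat; ifs; fin.
apply: (@reparam (cat p (cat q r)) phi (pth_path pqr) cphi).
- move=> s /andP[a0 a1]; rewrite phiv; ifs; apply/andP; split; lra.
- by rewrite phiv; ifs => //; lra.
- by rewrite phiv; ifs => //; lra.
Qed.

End Laws.



Section Laws2.
Variable R : realType.
Local Notation P := (R * R)%type.
Local Notation I := (@unitI R).
Variable X : set P.
Local Notation hom := (path_homotopic X).
Local Notation pth := (is_path_from_to X).
Local Notation cat := (@path_concat R).
Local Notation rev := (@path_rev R).

Lemma hom_idl a b p : pth a b p -> hom (cat (fun _ => a) p) p.
Proof.
move=> hp.
pose phi := (fun s : R => 2 * s + -1) \max (fun s : R => 0 * s + 0).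
have cphi : continuous phi by apply: cont_maxA; exact: cont_aff.
have phiv : forall s, phi s = if s <= 2^-1 then 0 else 2 * s - 1.
  move=> s; rewrite /phi /=; ifs.
    by rewrite max_r mul0r ?addr0 //; lra.
  by rewrite max_l //; lra.
apply: (@hom_trans _ _ _ (p \o phi)).
  apply: hom_eqI; first exact: (pth_path (pth_cat (pth_const (pth_X0 hp)) hp)).
  move=> s /andP[a0 a1]; rewrite /= phiv /path_concat; case: ifP => H //.
  by have [_ -> _] := hp.
have [pp p0 p1] := hp.
apply: (@reparam R X p phi pp cphi).
- move=> s /andP[a0 a1]; rewrite phiv; ifs; apply/andP; split; lra.
- by rewrite phiv; ifs => //; lra.
- by rewrite phiv; ifs => //; lra.
Qed.

Lemma hom_invr a b p : pth a b p -> hom (cat p (rev p)) (fun _ => a).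
Proof.
move=> hp.
pose phi := (fun s : R => 2 * s + 0) \min (fun s : R => -2 * s + 2).
have cphi : continuous phi by apply: cont_minA; exact: cont_aff.
have phiv : forall s, phi s = if s <= 2^-1 then 2 * s else -2 * s + 2.
  move=> s; rewrite /phi /=; ifs.
    by rewrite min_l ?addr0 //; lra.
  by rewrite min_r //; lra.
apply: (@hom_trans _ _ _ (p \o phi)).
  apply: hom_eqI; first exact: (pth_path (pth_cat hp (pth_rev hp))).
  move=> s /andP[a0 a1]; rewrite /= phiv /path_concat /path_rev; ifs; fin.
have [pp p0 p1] := hp.
rewrite -p0; apply: (@null R X p phi pp cphi).
- move=> s /andP[a0 a1]; rewrite phiv; ifs; apply/andP; split; lra.
- by rewrite phiv; ifs => //; lra.
- by rewrite phiv; ifs => //; lra.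
Qed.

Lemma hom_rev_cat a b c p q : pth a b p -> pth b c q ->
  hom (rev (cat p q)) (cat (rev q) (rev p)).
Proof.
move=> hp hq; apply: hom_eqI; first exact: (pth_path (pth_rev (pth_cat hp hq))).
move=> s /andP[a0 a1]; rewrite /path_rev /path_concat; ifs; fin.
have [_ _ p1] := hp; have [_ q0 _] := hq.
have -> : 2 * (1 - s) = 1 by lra.
have -> : 1 - 2 * s = 0 by lra.
by rewrite p1 q0.
Qed.

Lemma hom_rev_rev a b p : pth a b p -> hom (rev (rev p)) p.
Proof.
move=> hp; apply: hom_eqI; first exact: (pth_path (pth_rev (pth_rev hp))).
by move=> s _; rewrite /path_rev; f_equal; ring.
Qed.

Lemma hom_cat_l p q q' : is_path X p -> hom q q' -> p 1 = q 0 -> hom (cat p q) (cat p q').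
Proof. by move=> pp hq e; apply: hom_cat => //; exact: hom_refl. Qed.
Lemma hom_cat_r p p' q : hom p p' -> is_path X q -> p 1 = q 0 -> hom (cat p q) (cat p' q).
Proof. by move=> hp pq e; apply: hom_cat => //; exact: hom_refl. Qed.

Lemma hom_cancel a b c al w : pth a b al -> pth a c w ->
  hom (cat al (cat (rev al) w)) w.
Proof.
move=> ha hw.
have hr := pth_rev ha.
apply: hom_trans (hom_sym (hom_assoc ha hr hw)) _.
apply: hom_trans (hom_idl hw).
apply: hom_cat_r.
- exact: hom_invr ha.
- exact: pth_path hw.
- by have [_ -> _] := hw; rewrite cat1 rev1; have [_ -> _] := ha.
Qed.

End Laws2.


Section Group.
Variable R : realType.
Local Notation P := (R * R)%type.
Variable X : set P.
Local Notation hom := (path_homotopic X).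
Local Notation pth := (is_path_from_to X).
Local Notation cat := (@path_concat R).
Local Notation rev := (@path_rev R).

Lemma ends a b c p q : pth a b p -> pth b c q -> p 1 = q 0.
Proof. by move=> [_ _ ->] [_ -> _]. Qed.

Lemma wedge_mul x x0 al a b : pth x x0 al -> pth x x a -> pth x x b ->
  hom (cat (cat (rev al) (cat a b)) al) (cat (cat (cat (rev al) a) al) (cat (cat (rev al) b) al)).
Proof.
move=> hal ha hb; apply: hom_sym.
have hA := pth_rev hal.
have hAa := pth_cat hA ha. have hAb := pth_cat hA hb.
have hAbal := pth_cat hAb hal. have hbal := pth_cat hb hal.
have hab := pth_cat ha hb.
apply: hom_trans (hom_assoc hAa hal hAbal) _.
apply: (@hom_trans _ _ _ (cat (cat (rev al) a) (cat b al))).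
  apply: hom_cat_l; [exact: pth_path hAa| |exact: ends hAa (pth_cat hal hAbal)].
  apply: hom_trans (hom_cancel hal hbal).
  apply: hom_cat_l; [exact: pth_path hal| exact: hom_assoc hA hb hal| exact: ends hal hAbal].
apply: hom_trans (hom_assoc hA ha hbal) _.
apply: (@hom_trans _ _ _ (cat (rev al) (cat (cat a b) al))).
  apply: hom_cat_l; [exact: pth_path hA| |exact: ends hA (pth_cat ha hbal)].
  exact: hom_sym (hom_assoc ha hb hal).
exact: hom_sym (hom_assoc hA hab hal).
Qed.

Lemma conj_red x x0 a1 a2 m l : pth x x0 a1 -> pth x x0 a2 -> pth x x m ->
  hom l (cat (cat (rev a2) m) a2) ->
  hom (cat (cat (cat (rev a1) a2) l) (rev (cat (rev a1) a2))) (cat (cat (rev a1) m) a1).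
Proof.
move=> ha1 ha2 hm hl.
have hA1 := pth_rev ha1. have hA2 := pth_rev ha2.
have hg := pth_cat hA1 ha2.
have hL := pth_cat (pth_cat hA2 hm) ha2.
have hl' : pth x0 x0 l.
  have [lp L1 l0 l1 _] := hl; split => //.
    by rewrite l0; have [_ -> _] := hL.
  by rewrite l1; have [_ _ ->] := hL.
have hma2 := pth_cat hm ha2. have hA2a1 := pth_cat hA2 ha1.
have hma1 := pth_cat hm ha1.
apply: (@hom_trans _ _ _ (cat (cat (cat (rev a1) a2) (cat (cat (rev a2) m) a2)) (cat (rev a2) a1))).
  apply: hom_cat; last exact: ends (pth_cat hg hl') (pth_rev hg).
    by apply: hom_cat_l; [exact: pth_path hg| exact: hl| exact: ends hg hl'].
  apply: hom_trans (hom_rev_cat hA1 ha2) _.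
  apply: hom_cat_l; [exact: pth_path (pth_rev ha2)| exact: hom_rev_rev ha1|].
  exact: ends (pth_rev ha2) (pth_rev hA1).
apply: (@hom_trans _ _ _ (cat (cat (rev a1) (cat m a2)) (cat (rev a2) a1))).
  apply: hom_cat_r; [|exact: pth_path hA2a1| exact: ends (pth_cat hg hL) hA2a1].
  apply: hom_trans (hom_assoc hA1 ha2 hL) _.
  apply: hom_cat_l; [exact: pth_path hA1| |exact: ends hA1 (pth_cat ha2 hL)].
  apply: hom_trans (hom_cancel ha2 hma2).
  apply: hom_cat_l; [exact: pth_path ha2| exact: hom_assoc hA2 hm ha2| exact: ends ha2 hL].
apply: hom_trans (hom_assoc hA1 hma2 hA2a1) _.
apply: (@hom_trans _ _ _ (cat (rev a1) (cat m a1))); last exact: hom_sym (hom_assoc hA1 hm ha1).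
apply: hom_cat_l; [exact: pth_path hA1| |exact: ends hA1 (pth_cat hma2 hA2a1)].
apply: hom_trans (hom_assoc hm ha2 hA2a1) _.
apply: hom_cat_l; [exact: pth_path hm| exact: hom_cancel ha2 ha1| exact: ends hm (pth_cat ha2 hA2a1)].
Qed.

End Group.


Section Earring.
Variable R : realType.
Local Notation P := (R * R)%type.
Local Notation E := (@hawaiian_earring R).
Local Notation O := (origin R).

Definition sc (c : R) (z : P) : P := (c * z.1, c * z.2).
Definition nrm2 (z : P) : R := z.1 ^+ 2 + z.2 ^+ 2.
Definition Nr (z : P) : R := 2 * z.2 / nrm2 z.
Definition circ (n : nat) (z : P) :=
  z.1 ^+ 2 + (z.2 - n%:R^-1) ^+ 2 = (n%:R^-1) ^+ 2.

Lemma circ_nrm n z : (0 < n)%N -> circ n z <-> nrm2 z = 2 * z.2 / n%:R.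
Proof.
move=> n0; have nz : n%:R != 0 :> R by rewrite pnatr_eq0 -lt0n.
have key : z.1 ^+ 2 + (z.2 - n%:R^-1) ^+ 2 - (n%:R^-1) ^+ 2 = nrm2 z - 2 * z.2 / n%:R.
  by rewrite /nrm2; ring.
rewrite /circ; split => h.
  by apply/eqP; rewrite -subr_eq0 -key h subrr.
by apply/eqP; rewrite -subr_eq0 key h subrr.
Qed.

Lemma nrm2_eq0 z : nrm2 z = 0 -> z = O.
Proof.
rewrite /nrm2 => h.
have h1 : z.1 ^+ 2 = 0 by apply/eqP; rewrite eq_le sqr_ge0 andbT -h lerDl sqr_ge0.
have h2 : z.2 ^+ 2 = 0 by apply/eqP; rewrite eq_le sqr_ge0 andbT -h lerDr sqr_ge0.
move: h1 h2 => /eqP; rewrite sqrf_eq0 => /eqP e1 /eqP; rewrite sqrf_eq0 => /eqP e2.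
by case: z e1 e2 {h} => a b /= -> ->.
Qed.

Lemma N_circ n z : (0 < n)%N -> circ n z -> z <> O -> Nr z = n%:R.
Proof.
move=> n0 /(circ_nrm z n0) h zO; have nz : n%:R != 0 :> R by rewrite pnatr_eq0 -lt0n.
have h0 : nrm2 z != 0 by apply/eqP => /nrm2_eq0.
have z2 : z.2 != 0 by apply: contraNneq h0 => e; rewrite h e; rewrite mulr0 mul0r.
by rewrite /Nr h; field; apply/andP; split.
Qed.

Lemma sc_sc a b z : sc a (sc b z) = sc (a * b) z.
Proof. by rewrite /sc /= !mulrA. Qed.
Lemma sc1 z : sc 1 z = z.
Proof. by case: z => a b; rewrite /sc /= !mul1r. Qed.
Lemma sc0 c : sc c O = O.
Proof. by rewrite /sc /= mulr0. Qed.

Lemma circ_sc n k z : (0 < n)%N -> (0 < k)%N -> circ n z -> circ k (sc (n%:R / k%:R) z).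
Proof.
move=> n0 k0 /(circ_nrm z n0) h; apply/(circ_nrm _ k0).
have nz : n%:R != 0 :> R by rewrite pnatr_eq0 -lt0n.
have kz : k%:R != 0 :> R by rewrite pnatr_eq0 -lt0n.
have -> : nrm2 (sc (n%:R / k%:R) z) = (n%:R / k%:R) ^+ 2 * nrm2 z by rewrite /nrm2 /sc /=; ring.
by rewrite h /sc /=; field; apply/andP; split.
Qed.

Lemma E_circ z : E z -> z <> O -> exists n, [/\ (0 < n)%N, circ n z & Nr z = n%:R].
Proof.
move=> [n [n0 c]] zO; exists n; split => //; exact: N_circ.
Qed.

Lemma E_O : E O.
Proof. exists 1%N; split => //; rewrite /circ /=; ring. Qed.

Lemma circ_E n z : (0 < n)%N -> circ n z -> E z.
Proof. by move=> n0 c; exists n. Qed.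

Lemma sc_neq0 c z : c != 0 -> z <> O -> sc c z <> O.
Proof.
move=> c0 zO e; apply: zO; case: z e => a b; rewrite /sc /origin /= => -[] /eqP + /eqP.
by rewrite !mulf_eq0 (negbTE c0) /= => /eqP -> /eqP ->.
Qed.

End Earring.


Section Maps.
Variable R : realType.
Local Notation P := (R * R)%type.
Local Notation E := (@hawaiian_earring R).
Local Notation O := (origin R).

Definition kk (n : nat) : nat := if odd n then n.+1./2 else n./2.
Definition cf (n : nat) : R := n%:R / (kk n)%:R.
Definition ce (n : nat) : R := n%:R / (n.*2.-1)%:R.

Variables (X : set P) (x : P) (f1 f2 : P -> P).

Definition Fm (n : nat) (w : P) : P := if odd n then f1 (sc (cf n) w) else f2 (sc (cf n) w).
Definition Fe (z : P) : P := if z == O then x else Fm (Num.truncn (Nr z)) z.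
Definition e1 (z : P) : P := if z == O then O else sc (ce (Num.truncn (Nr z))) z.
Definition e2 (z : P) : P := sc 2^-1 z.

Lemma kk_pos n : (0 < n)%N -> (0 < kk n)%N.
Proof.
move=> n0; rewrite /kk; have h := odd_double_half n; have h2 := uphalf_half n.
rewrite uphalfE in h2; case: ifP => o; rewrite o in h h2; lia.
Qed.

Lemma truncn_Nr n z : (0 < n)%N -> circ n z -> z <> O -> Num.truncn (Nr z) = n.
Proof. by move=> n0 c zO; rewrite (N_circ n0 c zO) natrK. Qed.

Lemma Fe_circ n z : (0 < n)%N -> circ n z -> z <> O -> Fe z = Fm n z.
Proof.
move=> n0 c zO; rewrite /Fe ifF; first by rewrite (truncn_Nr n0 c zO).
by apply/eqP.
Qed.

Lemma Fm_E n z : (0 < n)%N -> circ n z -> E (sc (cf n) z).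
Proof. move=> n0 c; apply: (circ_E (kk_pos n0)); exact: circ_sc (kk_pos n0) c. Qed.

Lemma cf_pos n : (0 < n)%N -> 0 < cf n.
Proof. move=> n0; rewrite /cf divr_gt0 // ltr0n //; exact: kk_pos. Qed.

Lemma cf_le2 n : (0 < n)%N -> cf n <= 2.
Proof.
move=> n0; have k0 := kk_pos n0; rewrite /cf ler_pdivrMr ?ltr0n //.
have : (n <= 2 * kk n)%N.
  rewrite /kk; have h := odd_double_half n; have h2 := uphalf_half n.
  rewrite uphalfE in h2; case: ifP => o; rewrite o in h h2; lia.
by rewrite -(ler_nat R) natrM mulrC.
Qed.

Lemma Fe_O : Fe O = x.
Proof. by rewrite /Fe eqxx. Qed.

Lemma Fe_X : (forall y, E y -> X (f1 y)) -> (forall y, E y -> X (f2 y)) -> X x ->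
  forall z, E z -> X (Fe z).
Proof.
move=> h1 h2 Xx z Ez; have [->|zO] := eqVneq z O; first by rewrite Fe_O.
have zO' : z <> O by apply/eqP.
have [n [n0 c _]] := E_circ Ez zO'.
rewrite (Fe_circ n0 c zO') /Fm; have := Fm_E n0 c.
by case: ifP => _ ?; [apply: h1|apply: h2].
Qed.

Lemma m_pos k : (0 < k)%N -> (0 < k.*2.-1)%N.
Proof. by move=> k0; lia. Qed.

Lemma e1_circ k z : (0 < k)%N -> circ k z -> z <> O -> e1 z = sc (ce k) z.
Proof. by move=> k0 c zO; rewrite /e1 ifF ?(truncn_Nr k0 c zO) //; apply/eqP. Qed.

Lemma ce_neq0 k : (0 < k)%N -> ce k != 0.
Proof. by move=> k0; rewrite /ce mulf_neq0 // ?invr_eq0 pnatr_eq0 -lt0n // m_pos. Qed.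

Lemma e1_E z : E z -> E (e1 z).
Proof.
move=> Ez; have [->|zO] := eqVneq z O; first by rewrite /e1 eqxx; exact: E_O.
have zO' : z <> O by apply/eqP.
have [k [k0 c _]] := E_circ Ez zO'.
rewrite (e1_circ k0 c zO'); apply: (circ_E (m_pos k0)); exact: circ_sc k0 (m_pos k0) c.
Qed.

Lemma Fe_e1 : f1 O = x -> forall z, E z -> Fe (e1 z) = f1 z.
Proof.
move=> f1O z Ez; have [->|zO] := eqVneq z O; first by rewrite /e1 eqxx Fe_O.
have zO' : z <> O by apply/eqP.
have [k [k0 c _]] := E_circ Ez zO'.
have m0 := m_pos k0.
have cw := circ_sc k0 m0 c.
have wO : sc (ce k) z <> O by apply: sc_neq0 => //; exact: ce_neq0.
rewrite (e1_circ k0 c zO') (Fe_circ m0 cw wO) /Fm.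
have mS : (k.*2.-1).+1 = k.*2 by lia.
have om : odd (k.*2.-1) by move: (odd_double k); rewrite -mS /= => /negbFE.
have kkm : kk k.*2.-1 = k by rewrite /kk om mS doubleK.
rewrite om sc_sc.
have -> : cf k.*2.-1 * ce k = 1.
  rewrite /cf /ce kkm; have kz : k%:R != 0 :> R by rewrite pnatr_eq0 -lt0n.
  have mz : (k.*2.-1)%:R != 0 :> R by rewrite pnatr_eq0 -lt0n.
  by field; apply/andP; split.
by rewrite sc1.
Qed.

Lemma e2_E z : E z -> E (e2 z).
Proof.
move=> Ez; have [->|zO] := eqVneq z O; first by rewrite /e2 sc0; exact: E_O.
have zO' : z <> O by apply/eqP.
have [k [k0 c _]] := E_circ Ez zO'.
have k20 : (0 < k.*2)%N by lia.
have -> : e2 z = sc (k%:R / (k.*2)%:R) z.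
  rewrite /e2 -muln2 natrM; congr sc; have kz : k%:R != 0 :> R by rewrite pnatr_eq0 -lt0n.
  by field.
apply: (circ_E k20); exact: circ_sc k20 c.
Qed.

Lemma Fe_e2 : f2 O = x -> forall z, E z -> Fe (e2 z) = f2 z.
Proof.
move=> f2O z Ez; have [->|zO] := eqVneq z O; first by rewrite /e2 sc0 Fe_O.
have zO' : z <> O by apply/eqP.
have [k [k0 c _]] := E_circ Ez zO'.
have k20 : (0 < k.*2)%N by lia.
have kz : k%:R != 0 :> R by rewrite pnatr_eq0 -lt0n.
have -> : e2 z = sc (k%:R / (k.*2)%:R) z.
  by rewrite /e2 -muln2 natrM; congr sc; field.
have cw := circ_sc k0 k20 c.
have wO : sc (k%:R / (k.*2)%:R) z <> O.
  apply: sc_neq0 => //; rewrite mulf_neq0 // invr_eq0 pnatr_eq0 -lt0n //.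
rewrite (Fe_circ k20 cw wO) /Fm odd_double sc_sc.
have -> : cf k.*2 * (k%:R / (k.*2)%:R) = 1.
  rewrite /cf /kk odd_double doubleK -muln2 natrM; by field.
by rewrite sc1.
Qed.

End Maps.


Section Topo.
Variable R : realType.
Local Notation P := (R * R)%type.
Local Notation E := (@hawaiian_earring R).
Local Notation O := (origin R).

Lemma cont_nrm2 : continuous (@nrm2 R).
Proof.
have -> : @nrm2 R = fun z => z.1 * z.1 + z.2 * z.2 by apply: funext => z; rewrite /nrm2 !expr2.
by move=> z; apply: cvgD; apply: cvgM; (exact: cvg_fst || exact: cvg_snd).
Qed.

Lemma cont_Nr (z0 : P) : z0 <> O -> (@Nr R) @ z0 --> Nr z0.
Proof.
move=> zO; have h0 : nrm2 z0 != 0 by apply/eqP => /nrm2_eq0.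
rewrite /Nr; apply: cvgM; first by apply: cvgM; [exact: cvg_cst|exact: cvg_snd].
by apply: cvgV => //; exact: cont_nrm2.
Qed.

Lemma cont_sc (c : R) : continuous (sc c).
Proof.
move=> z; apply: (@cvg_pair _ _ _ _ (nbhs (c * z.1)) (nbhs (c * z.2))).
  by apply: cvgM; [exact: cvg_cst|exact: cvg_fst].
by apply: cvgM; [exact: cvg_cst|exact: cvg_snd].
Qed.

Lemma nat_close (n m : nat) : `|n%:R - m%:R : R| < 2^-1 -> m = n.
Proof.
move=> h; case: (ltngtP m n) => // mn; exfalso.
  have : (m + 1)%:R <= n%:R :> R by rewrite ler_nat addn1.
  rewrite natrD => h2; have h3 := @ler_norm R (n%:R - m%:R); move: h h2 h3; clear mn.
  move: (n%:R : R) (m%:R : R) => a b h h2 h3; lra.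
have : (n + 1)%:R <= m%:R :> R by rewrite ler_nat addn1.
rewrite natrD => h2; rewrite distrC in h; have h3 := @ler_norm R (m%:R - n%:R); move: h h2 h3; clear mn.
move: (n%:R : R) (m%:R : R) => a b h h2 h3; lra.
Qed.

Lemma Nr_loc n (z0 : P) : (0 < n)%N -> circ n z0 -> z0 <> O ->
  \forall w \near z0, E w -> w <> O /\ circ n w.
Proof.
move=> n0 c zO.
have := cont_Nr zO => /cvgrPdist_lt /(_ 2^-1); rewrite invr_gt0 ltr0n => /(_ isT).
apply: filterS => w hw Ew; rewrite (N_circ n0 c zO) in hw.
have [wO|wO] := eqVneq w O.
  exfalso; move: hw; rewrite wO /Nr /nrm2 /= expr2 !mulr0 addr0 mul0r subr0.
  have : 1 <= n%:R :> R by rewrite ler1n.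
  rewrite ger0_norm ?ler0n //; lra.
have wO' : w <> O by apply/eqP.
have [m [m0 cm em]] := E_circ Ew wO'.
rewrite em in hw; have := nat_close hw => e; subst m; split => //.
Qed.

Lemma cvg_within_into_near {T U : Type} (A : set T) (B : set U) (F : set_system T) (G : set_system U)
  (g : T -> U) {FF : Filter F} : F (fun y => A y -> B (g y)) -> g @ within A F --> G ->
  g @ within A F --> within B G.
Proof.
move=> AB gG P /= WP.
have := gG _ WP; rewrite /within /= !nbhs_simpl /=.
move=> H; apply: (filterS2 _ _ H AB) => y /= h h2 Ay; exact: (h Ay (h2 Ay)).
Qed.

Lemma ball_sc (e e' c : R) (w : P) : 0 < c <= 2 -> e' <= e -> ball O (e' / 2) w -> ball O e (sc c w).
Proof.
move=> /andP[c0 c2] ee [b1 b2]; move: b1 b2; rewrite /ball /= !sub0r !normrN => b1 b2.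
split; rewrite /ball /= sub0r normrN normrM (ger0_norm (ltW c0)).
  have := normr_ge0 w.1; nra.
have := normr_ge0 w.2; nra.
Qed.

Lemma origin_cvg (G f1 f2 : P -> P) (y : P) :
  f1 @ within E (nbhs O) --> y -> f2 @ within E (nbhs O) --> y -> G O = y ->
  (forall w, E w -> w <> O -> exists c, [/\ 0 < c <= 2, E (sc c w) &
     (G w = f1 (sc c w) \/ G w = f2 (sc c w))]) ->
  G @ within E (nbhs O) --> y.
Proof.
move=> h1 h2 GO hw V Vy.
have /nbhs_ballP[e1 e1p B1] := h1 V Vy.
have /nbhs_ballP[e2 e2p B2] := h2 V Vy.
rewrite /= nbhs_simpl /within /=.
apply/nbhs_ballP; exists (Num.min e1 e2 / 2).
  by rewrite /= divr_gt0 // lt_min; apply/andP; split; [exact: e1p|exact: e2p].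
move=> w Bw Ew.
have [wO|wO] := eqVneq w O; first by rewrite /preimage /= wO GO; exact: nbhs_singleton Vy.
have [c [c02 Ec [e|e]]] := hw w Ew (fun e => negP wO (introT eqP e));
  rewrite /preimage /= e.
  by apply: (B1 (sc c w)) => //; apply: ball_sc c02 _ Bw; by rewrite ge_min lexx.
by apply: (B2 (sc c w)) => //; apply: ball_sc c02 _ Bw; by rewrite ge_min lexx orbT.
Qed.

Lemma sc_cvg_within n c (z0 : P) : (0 < n)%N -> circ n z0 -> z0 <> O ->
  (forall w, circ n w -> E (sc c w)) ->
  sc c @ within E (nbhs z0) --> within E (nbhs (sc c z0)).
Proof.
move=> n0 cz zO hE; apply: cvg_within_into_near.
  by apply: filterS (Nr_loc n0 cz zO) => w h Ew; have [_ cw] := h Ew; exact: hE.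
have h : sc c @ within E (nbhs z0) --> sc c z0.
  have := (@continuous_subspaceT _ _ E _ (@cont_sc c)); move/subspace_continuousP; apply; exact: circ_E cz.
exact: h.
Qed.

Lemma local_cvg n (z0 : P) (G K : P -> P) : (0 < n)%N -> circ n z0 -> z0 <> O ->
  (forall w, circ n w -> w <> O -> G w = K w) ->
  K @ within E (nbhs z0) --> K z0 -> G @ within E (nbhs z0) --> G z0.
Proof.
move=> n0 cz zO GK hK; rewrite (GK _ cz zO).
apply: cvg_trans hK; apply: near_eq_cvg.
rewrite /within /= /prop_near1 /=.
by apply: filterS (Nr_loc n0 cz zO) => w h Ew; have [wO cw] := h Ew; rewrite GK.
Qed.

Lemma Fe_cont (x : P) (f1 f2 : P -> P) :
  {within E, continuous f1} -> {within E, continuous f2} -> f1 O = x -> f2 O = x ->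
  {within E, continuous (Fe x f1 f2)}.
Proof.
move=> /subspace_continuousP c1 /subspace_continuousP c2 e1 e2.
apply/subspace_continuousP => z0 Ez0; rewrite /from_subspace /=.
have [->|zO] := eqVneq z0 O.
  rewrite /from_subspace Fe_O; apply: (@origin_cvg _ f1 f2).
  - by rewrite -e1; exact: (c1 O (@E_O R)).
  - by rewrite -e2; exact: (c2 O (@E_O R)).
  - exact: Fe_O.
  move=> w Ew wO; have [n [n0 c _]] := E_circ Ew wO; exists (cf R n); split.
  - by rewrite cf_pos // cf_le2.
  - exact: Fm_E.
  - by rewrite (Fe_circ _ _ _ n0 c wO) /Fm; case: ifP => _; [left|right].
have zO' : z0 <> O by apply/eqP.
have [n [n0 c _]] := E_circ Ez0 zO'.
apply: (@local_cvg n z0 _ (Fm f1 f2 n)) => //.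
  by move=> w cw wO; exact: Fe_circ.
have key (f : P -> P) : (forall y, E y -> f @ within E (nbhs y) --> f y) ->
    (f \o sc (cf R n)) @ within E (nbhs z0) --> f (sc (cf R n) z0).
  move=> cfy.
  have h1 := @sc_cvg_within n (cf R n) z0 n0 c zO' (fun w cw => Fm_E n0 cw).
  have h2 := cfy _ (Fm_E n0 c).
  exact: (cvg_comp _ _ h1 h2).
by rewrite /Fm; case: ifP => _; apply: key.
Qed.

Lemma ce_pos k : (0 < k)%N -> 0 < ce R k.
Proof. move=> k0; rewrite /ce divr_gt0 // ltr0n //; exact: m_pos. Qed.

Lemma ce_le2 k : (0 < k)%N -> ce R k <= 2.
Proof.
move=> k0; rewrite /ce ler_pdivrMr ?ltr0n ?m_pos //.
have : (k <= 2 * k.*2.-1)%N by lia.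
by rewrite -(ler_nat R) natrM mulrC.
Qed.

Lemma e1_cont : {within E, continuous (@e1 R)}.
Proof.
apply/subspace_continuousP => z0 Ez0; rewrite /from_subspace /=.
have [->|zO] := eqVneq z0 O.
  have eO : e1 O = O by rewrite /e1 eqxx.
  rewrite eO; apply: (@origin_cvg _ id id) => //.
  - exact: cvg_within.
  - exact: cvg_within.
  move=> w Ew wO; have [k [k0 c _]] := E_circ Ew wO; exists (ce R k); split.
  - by rewrite ce_pos // ce_le2.
  - by rewrite -(e1_circ k0 c wO); exact: e1_E.
  - by left; exact: e1_circ.
have zO' : z0 <> O by apply/eqP.
have [n [n0 c _]] := E_circ Ez0 zO'.
apply: (@local_cvg n z0 _ (sc (ce R n))) => //.
  by move=> w cw wO; exact: e1_circ.
by apply: (cvg_trans _ (@cont_sc _ z0)); apply: cvg_fmap2; exact: cvg_within.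
Qed.

Lemma e2_cont : {within E, continuous (@e2 R)}.
Proof. exact/continuous_subspaceT/cont_sc. Qed.

End Topo.


Section Main.
Variable R : realType.
Local Notation P := (R * R)%type.
Local Notation E := (@hawaiian_earring R).
Local Notation O := (origin R).
Local Notation I := (@unitI R).
Local Notation cat := (@path_concat R).
Local Notation rev := (@path_rev R).

Lemma pth_map (Y X : set P) (F : P -> P) a b g :
  {within Y, continuous F} -> (forall y, Y y -> X (F y)) ->
  is_path_from_to Y a b g -> is_path_from_to X (F a) (F b) (F \o g).
Proof.
move=> cF FY [[cg ig] g0 g1]; split; rewrite /= ?g0 ?g1 //; split.
  by apply: (compW cg cF) => s Is; apply: ig; exists s.
by move=> _ [s Is <-]; apply: FY; apply: ig; exists s.
Qed.

Lemma wedge_cong (X : set P) x x0 al a b : is_path_from_to X x x0 al -> is_path_from_to X x x a ->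
  path_homotopic X a b -> path_homotopic X (cat (cat (rev al) a) al) (cat (cat (rev al) b) al).
Proof.
move=> hal ha hab.
apply: hom_cat_r; last first.
- by rewrite cat1; have [_ _ ->] := ha; have [_ -> _] := hal.
- exact: pth_path hal.
apply: hom_cat_l => //; first exact: pth_path (pth_rev hal).
exact: ends (pth_rev hal) ha.
Qed.

Lemma comp_cat (F : P -> P) g g' : F \o cat g g' = cat (F \o g) (F \o g').
Proof. by apply: funext => s; rewrite /= /path_concat; case: ifP. Qed.

End Main.

Theorem mainTheorem14 (R : realType) (X : set (R * R)) (x0 x : R * R)
    (H1 H2 : set (R -> R * R)) :
  planar_peano_continuum X -> X x0 -> X x ->
  pseudo_HE_subgroup X x0 H1 -> pseudo_HE_subgroup X x0 H2 ->
  wedge_point X x0 H1 x -> wedge_point X x0 H2 x ->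
  HE_equiv X x0 H1 H2.
Proof.
move=> _ X0 Xx [_ unc1] _ [f1 [a1 [cf1 if1 f1O ha1 [psi1 [hom1 img1 w1]]]]]
  [f2 [a2 [cf2 if2 f2O ha2 [psi2 [hom2 img2 w2]]]]].
have fX1 : forall y, (@hawaiian_earring R) y -> X (f1 y) by move=> y Ey; apply: if1; exists y.
have fX2 : forall y, (@hawaiian_earring R) y -> X (f2 y) by move=> y Ey; apply: if2; exists y.
pose F := Fe x f1 f2.
have cF : {within (@hawaiian_earring R), continuous F} := Fe_cont cf1 cf2 f1O f2O.
have FX : forall y, (@hawaiian_earring R) y -> X (F y) := Fe_X fX1 fX2 Xx.
have FO : F (origin R) = x := Fe_O x f1 f2.
have loopF : forall g, is_loop (@hawaiian_earring R) (origin R) g -> is_path_from_to X x x (F \o g).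
  by move=> g hg; have := pth_map cF FX hg; rewrite FO.
have gE : forall g s, is_loop (@hawaiian_earring R) (origin R) g -> unitI s -> (@hawaiian_earring R) (g s).
  by move=> g s [[_ ig] _ _] Is; apply: ig; exists s.
pose psi := wedge_map F a1.
pose H := fun l => is_loop X x0 l /\ exists g, is_loop (@hawaiian_earring R) (origin R) g /\
   path_homotopic X (psi g) l.
have hpsi : HE_hom X x0 psi.
  split.
  - by move=> g hg; exact: pth_cat (pth_cat (pth_rev ha1) (loopF g hg)) ha1.
  - move=> g g' hgg hg; apply: (wedge_cong ha1 (loopF g hg)).
    exact: hom_map cF FX hgg.
  - move=> g g' hg hg'; rewrite /psi /wedge_map comp_cat.
    exact: wedge_mul ha1 (loopF g hg) (loopF g' hg').
have e1O : e1 (origin R) = origin R by rewrite /e1 eqxx.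
have e2O : e2 (origin R) = origin R by rewrite /e2 sc0.
have sub1 : H1 `<=` H.
  move=> l /img1 [ll [g [hg hl]]]; split => //.
  have he : is_loop (@hawaiian_earring R) (origin R) (@e1 R \o g).
    by have := pth_map (@e1_cont R) (@e1_E R) hg; rewrite e1O.
  exists (@e1 R \o g); split => //.
  apply: hom_trans _ hl; apply: hom_trans _ (hom_sym (w1 g hg)).
  rewrite /psi /wedge_map; apply: (wedge_cong ha1 (loopF _ he)).
  apply: hom_eqI; first exact: pth_path (loopF _ he).
  by move=> s Is /=; apply: Fe_e1 => //; exact: gE hg Is.
have unc : ~ countable_classes X H.
  move=> [c hc]; apply: unc1; exists c => l l' h1 h2; apply: hc; exact: sub1.
exists (path_concat (path_rev a1) a2), H; split.
- exact: pth_cat (pth_rev ha1) ha2.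
- by split => //; exists psi; split.
- exact: sub1.
move=> l /img2 [ll [g [hg hl]]].
have hm : is_path_from_to X x x (f2 \o g).
  by have := pth_map cf2 fX2 hg; rewrite f2O.
have hl' : path_homotopic X l (path_concat (path_concat (path_rev a2) (f2 \o g)) a2) := hom_trans (hom_sym hl) (w2 g hg).
have key := conj_red ha1 ha2 hm hl'.
have hga := pth_cat (pth_rev ha1) ha2.
split.
  exact: pth_cat (pth_cat hga ll) (pth_rev hga).
have he : is_loop (@hawaiian_earring R) (origin R) (@e2 R \o g).
  by have := pth_map (@e2_cont R) (@e2_E R) hg; rewrite e2O.
exists (@e2 R \o g); split => //.
apply: hom_trans _ (hom_sym key).
rewrite /psi /wedge_map; apply: (wedge_cong ha1 (loopF _ he)).
apply: hom_eqI; first exact: pth_path (loopF _ he).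
by move=> s Is /=; apply: Fe_e2 => //; exact: gE hg Is.
Qed.
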